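(* Let $f:\mathbb{R}^n\to\mathbb{R}$ be convex, differentiable and bounded from below, with $\nabla f$ being $L$-Lipschitz continuous ($L>0$), let $\lambda>0$, and let $H(x)=f(x)+\lambda\|x\|_0$. Let $\{x_k\},\{y_k\}$ be generated by the VMEPIHT method described in the context. Then: (1) every cluster point of $\{x_k\}$ is a local minimizer of $H$; (2) if $x^*$ is a cluster point of $\{x_k\}$, then $H(x_k)\to H(x^* )$.
   Context: $\|x\|_0$ denotes the number of nonzero components of $x\in\mathbb{R}^n$. For $x\in\mathbb{R}^n$, $I(x):=\{i: x_i=0\}$. For an index set $I\subseteq\{1,\dots,n\}$, $C_I:=\{x\in\mathbb{R}^n: x_i=0 \text{ for all } i\in I\}$, and $P_C(x)=\arg\min_{z\in C}\frac12\|z-x\|^2$ is the Euclidean projection onto $C$. VMEPIHT method: fix parameters $\mu>0$, $\lambda>0$ and a starting point $y_0\in\mathbb{R}^n$. For $k=0,1,2,\dots$: choose $x_k\in\arg\min_{x\in\mathbb{R}^n}\ \lambda\|x\|_0+\frac{L}{2}\|x-y_k+\frac1L\nabla f(y_k)\|^2+\frac{\mu}{2}\|x-y_k\|^2$; then choose a symmetric positive definite matrix $H_k$ and a step length $\alpha_k\ge 0$, and set $y_{k+1}=P_{C_{I(x_k)}}(x_k-\alpha_kH_k\nabla f(x_k))$, where $\alpha_k$ is chosen so that $f(y_{k+1})\leq f(x_k)$. *)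

(* Defs.v *)
From HB Require Import structures.
From mathcomp Require Import all_boot all_order all_algebra.
From mathcomp Require Import all_classical all_reals all_analysis.
Set Implicit Arguments. Unset Strict Implicit. Unset Printing Implicit Defensive.
Import Order.TTheory GRing.Theory Num.Theory.
Local Open Scope ring_scope.

Section Defs.
Variables (R : realType) (n : nat).
Notation vec := 'cV[R]_n.

Definition dot (x y : vec) : R := \sum_(i < n) x i 0 * y i 0.
Definition enorm (x : vec) : R := Num.sqrt (dot x x).

Definition l0norm (x : vec) : nat := #|[set i : 'I_n | x i 0 != 0]|.

Definition zero_idx (x : vec) : {set 'I_n} := [set i : 'I_n | x i 0 == 0].

Definition C_I (I : {set 'I_n}) (x : vec) : Prop := forall i, i \in I -> x i 0 = 0.

Definition is_proj (C : vec -> Prop) (v p : vec) : Prop :=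
  C p /\ forall z, C z -> 2^-1 * enorm (p - v) ^+ 2 <= 2^-1 * enorm (z - v) ^+ 2.

Definition is_argmin (phi : vec -> R) (x : vec) : Prop := forall z, phi x <= phi z.

Definition convex_fun (f : vec -> R) : Prop :=
  forall (x y : vec) (t : R), 0 <= t -> t <= 1 ->
    f ((1 - t) *: x + t *: y) <= (1 - t) * f x + t * f y.

Definition has_gradient (f : vec -> R) (g : vec -> vec) : Prop :=
  forall x : vec, forall eps : R, 0 < eps -> exists2 delta : R, 0 < delta &
    forall h : vec, enorm h < delta ->
      `|f (x + h) - f x - dot (g x) h| <= eps * enorm h.

Definition lipschitz_with (L : R) (g : vec -> vec) : Prop :=
  forall x y, enorm (g x - g y) <= L * enorm (x - y).

Definition bounded_below (f : vec -> R) : Prop := exists m : R, forall x, m <= f x.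

Definition sym_posdef (M : 'M[R]_n) : Prop :=
  M^T = M /\ forall v : vec, v != 0 -> 0 < dot v (M *m v).

Definition cluster_point (x : nat -> vec) (xs : vec) : Prop :=
  forall eps : R, 0 < eps -> forall N : nat, exists2 k : nat, (N <= k)%N &
    enorm (x k - xs) < eps.

Definition local_minimizer (H : vec -> R) (xs : vec) : Prop :=
  exists2 delta : R, 0 < delta & forall y, enorm (y - xs) < delta -> H xs <= H y.

Definition Hfun (f : vec -> R) (lam : R) (x : vec) : R := f x + lam * (l0norm x)%:R.

Definition VMEPIHT (f : vec -> R) (g : vec -> vec) (L mu lam : R)
    (x y : nat -> vec) (alpha : nat -> R) (Hm : nat -> 'M[R]_n) : Prop :=
  forall k : nat,
    [/\ is_argmin (fun z => lam * (l0norm z)%:R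
                     + L / 2 * enorm (z - y k + L^-1 *: g (y k)) ^+ 2
                     + mu / 2 * enorm (z - y k) ^+ 2) (x k),
        sym_posdef (Hm k),
        0 <= alpha k,
        is_proj (C_I (zero_idx (x k))) (x k - alpha k *: (Hm k *m g (x k))) (y k.+1)
      & f (y k.+1) <= f (x k)].

End Defs.

(* Main.v *)
Require Import Defs.
From HB Require Import structures.
From mathcomp Require Import all_boot all_order all_algebra.
From mathcomp Require Import all_classical all_reals all_analysis.
From mathcomp Require Import ring lra.
Import Order.TTheory GRing.Theory Num.Theory.
Import numFieldNormedType.Exports.
Set Implicit Arguments. Unset Strict Implicit. Unset Printing Implicit Defensive.
Local Open Scope ring_scope.


Section Vec.
Variables (R : realType) (n : nat).
Notation vec := 'cV[R]_n.
Implicit Types (x y z u v : vec).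

Lemma dotC x y : dot x y = dot y x.
Proof. by apply: eq_bigr => i _; rewrite mulrC. Qed.

Lemma dotDl x y z : dot (x + y) z = dot x z + dot y z.
Proof. by rewrite /dot -big_split; apply: eq_bigr => i _; rewrite mxE mulrDl. Qed.

Lemma dotZl a x y : dot (a *: x) y = a * dot x y.
Proof. by rewrite /dot mulr_sumr; apply: eq_bigr => i _; rewrite mxE mulrA. Qed.

Lemma dotNl x y : dot (- x) y = - dot x y.
Proof. by rewrite -scaleN1r dotZl mulN1r. Qed.

Lemma dotBl x y z : dot (x - y) z = dot x z - dot y z.
Proof. by rewrite dotDl dotNl. Qed.

Lemma dotDr x y z : dot z (x + y) = dot z x + dot z y.
Proof. by rewrite dotC dotDl !(dotC z). Qed.

Lemma dotZr a x y : dot y (a *: x) = a * dot y x.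
Proof. by rewrite dotC dotZl dotC. Qed.

Lemma dotNr x y : dot y (- x) = - dot y x.
Proof. by rewrite dotC dotNl dotC. Qed.

Lemma dotBr x y z : dot z (x - y) = dot z x - dot z y.
Proof. by rewrite dotDr dotNr. Qed.

Lemma dot0l x : dot 0 x = 0.
Proof. by rewrite -(scale0r 0) dotZl mul0r. Qed.

Lemma dot_ge0 x : 0 <= dot x x.
Proof. by apply: sumr_ge0 => i _; rewrite -expr2 sqr_ge0. Qed.

Lemma dot_delta x (i : 'I_n) : dot x (delta_mx i 0) = x i 0.
Proof.
rewrite /dot (bigD1 i) //= big1 => [|j ji]; first by rewrite !mxE !eqxx mulr1 addr0.
by rewrite !mxE (negbTE ji) mulr0.
Qed.

Lemma comp_sq_le x (i : 'I_n) : x i 0 ^+ 2 <= dot x x.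
Proof.
rewrite /dot (bigD1 i) //= expr2 lerDl.
by apply: sumr_ge0 => j _; rewrite -expr2 sqr_ge0.
Qed.

Lemma enorm_sq x : enorm x ^+ 2 = dot x x.
Proof. by rewrite /enorm sqr_sqrtr // dot_ge0. Qed.

Lemma enorm_ge0 x : 0 <= enorm x.
Proof. exact: sqrtr_ge0. Qed.

Lemma comp_le x (i : 'I_n) : `|x i 0| <= enorm x.
Proof.
rewrite -sqrtr_sqr /enorm; apply: ler_wsqrtr; exact: comp_sq_le.
Qed.

Lemma enormZ a x : enorm (a *: x) = `|a| * enorm x.
Proof.
by rewrite /enorm dotZl dotZr mulrA -expr2 sqrtrM ?sqr_ge0 // sqrtr_sqr.
Qed.

Lemma enormN x : enorm (- x) = enorm x.
Proof. by rewrite -scaleN1r enormZ normrN normr1 mul1r. Qed.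

Lemma dot_eq0 x : dot x x = 0 -> x = 0.
Proof.
move=> /eqP; rewrite psumr_eq0 => [H|i _]; last by rewrite -expr2 sqr_ge0.
apply/matrixP => i j; rewrite ord1 mxE.
by have := implyP (allP H i (mem_index_enum _)) isT; rewrite mulf_eq0 orbb => /eqP.
Qed.

Lemma sqdot x y : dot (x + y) (x + y) = dot x x + 2 * dot x y + dot y y.
Proof. rewrite dotDl !dotDr (dotC y x); ring. Qed.

Lemma CS u v : dot u v <= enorm u * enorm v.
Proof.
have Hn := enorm_ge0 u; have Hm := enorm_ge0 v.
have key : 0 <= dot (enorm v *: u - enorm u *: v) (enorm v *: u - enorm u *: v) by exact: dot_ge0.
rewrite sqdot !dotZl !dotZr !dotNl !dotNr !dotZl !dotZr -!enorm_sq in key.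
move: key. set a := enorm u; set b := enorm v; set c := dot u v. move=> key.
have E : 0 <= 2 * (a * b) * (a * b - c).
  by move: key; have -> : b * (b * a ^+ 2) + 2 * (b * - (a * c)) - - (a * (a * b ^+ 2)) = 2 * (a * b) * (a * b - c) by ring.
have [Hab|Hab] := eqVneq (a * b) 0.
  have : a = 0 \/ b = 0 by move/eqP: Hab; rewrite mulf_eq0 => /orP[/eqP->|/eqP->]; [left|right].
  case=> H0.
    have : u = 0 by apply: dot_eq0; rewrite -enorm_sq -/a H0 expr0n.
    by rewrite /c => ->; rewrite dot0l Hab.
  have : v = 0 by apply: dot_eq0; rewrite -enorm_sq -/b H0 expr0n.
  by rewrite /c => ->; rewrite dotC dot0l Hab.
have Hp : 0 < 2 * (a * b) by rewrite mulr_gt0 // lt_neqAle eq_sym Hab mulr_ge0.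
by rewrite -subr_ge0 -(pmulr_rge0 _ Hp).
Qed.

Lemma enormD x y : enorm (x + y) <= enorm x + enorm y.
Proof.
have H1 := enorm_ge0 x; have H2 := enorm_ge0 y; have H3 := enorm_ge0 (x + y).
have : enorm (x + y) ^+ 2 <= (enorm x + enorm y) ^+ 2.
  rewrite enorm_sq sqdot -!enorm_sq; have := CS x y; lra.
rewrite ler_pXn2r ?nnegrE //; lra.
Qed.

Lemma enorm_eq0 x : enorm x = 0 -> x = 0.
Proof. by move=> H; apply: dot_eq0; rewrite -enorm_sq H expr0n. Qed.

Lemma CSabs u v : `|dot u v| <= enorm u * enorm v.
Proof.
rewrite ler_norml CS andbT.
have := CS u (- v); rewrite dotNr enormN; lra.
Qed.

End Vec.


Section Anal.
Variables (R : realType) (n : nat).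
Notation vec := 'cV[R]_n.
Variables (f : vec -> R) (g : vec -> vec).
Hypothesis fconv : convex_fun f.
Hypothesis fgrad : has_gradient f g.

Lemma FO x z : f x + dot (g x) (z - x) <= f z.
Proof.
rewrite leNgt; apply/negP => Hlt.
set d := z - x; set G := dot (g x) d.
set nd := enorm d.
have Hnd : 0 <= nd := enorm_ge0 d.
set gap := f x + G - f z.
have Hgap : 0 < gap by rewrite /gap subr_gt0.
set eps := gap / (2 * (nd + 1)).
have Hnd1 : 0 < 2 * (nd + 1) by lra.
have Heps : 0 < eps by rewrite divr_gt0.
have Heq : eps * (2 * (nd + 1)) = gap by rewrite /eps mulfVK // gt_eqF.
have [delta Hd Hdelta] := fgrad x Heps.
set t := Num.min 1 (delta / (2 * (nd + 1))).
have Ht0 : 0 < t by rewrite lt_min ltr01 divr_gt0.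
have Ht1 : t <= 1 by rewrite ge_min lexx.
have Htd : t * (2 * (nd + 1)) <= delta.
  by rewrite -ler_pdivlMr // ge_min lexx orbT.
have Hnorm : enorm (t *: d) = t * nd by rewrite enormZ gtr0_norm.
have Hsm : enorm (t *: d) < delta by rewrite Hnorm; nra.
have := Hdelta _ Hsm; rewrite ler_norml dotZr -/G Hnorm => /andP[H1 _].
have Hc := fconv x z (ltW Ht0) Ht1.
have E : (1 - t) *: x + t *: z = x + t *: d.
  by apply/matrixP => i j; rewrite !mxE; ring.
rewrite E in Hc.
have H2 : t * (G - eps * nd) <= t * (f z - f x) by lra.
rewrite ler_pM2l // in H2.
have E2 : eps * nd * 2 + 2 * eps = gap by rewrite -Heq; ring.
have Eg : gap = f x + G - f z by [].
lra.
Qed.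


Lemma fcont x eps : 0 < eps -> exists2 rho, 0 < rho &
  forall z, enorm (z - x) < rho -> `|f z - f x| < eps.
Proof.
move=> he.
have [delta Hd Hdelta] := fgrad x ltr01.
set c := enorm (g x) + 1.
have Hc : 0 < c by rewrite /c; have := enorm_ge0 (g x); lra.
exists (Num.min delta (eps / c)); first by rewrite lt_min Hd divr_gt0.
move=> z; rewrite lt_min => /andP[H1 H2].
have := Hdelta (z - x) H1.
have -> : x + (z - x) = z by rewrite addrC subrK.
have := CSabs (g x) (z - x).
rewrite ltr_pdivlMr // in H2.
have Hn := enorm_ge0 (z - x).
set h := enorm (z - x) in H1 H2 Hn *.
move=> H3 H4.
have H5 : `|f z - f x| <= `|f z - f x - dot (g x) (z - x)| + `|dot (g x) (z - x)|.
  by have := ler_normD (f z - f x - dot (g x) (z - x)) (dot (g x) (z - x)); rewrite subrK.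
have E : h * c = enorm (g x) * h + 1 * h by rewrite /c; ring.
lra.
Qed.

Variable (L : R).
Hypothesis HL : 0 <= L.
Hypothesis glip : lipschitz_with L g.

Lemma DLgen (s : R) y d m : 0 < s ->
  f (y + (m%:R * s) *: d) - f y <=
  m%:R * s * dot (g y) d + L * enorm d ^+ 2 * (s * s * (m%:R * (m%:R + 1) / 2)).
Proof.
move=> hs; set A := dot (g y) d; set B := L * enorm d ^+ 2.
have Hnd := enorm_ge0 d.
elim: m => [|m IH].
  rewrite !mulr0n !mul0r scale0r addr0 subrr; lra.
set p' := y + (m.+1%:R * s) *: d.
have H1 := FO (y + (m%:R * s) *: d) p'.
have E1 : y + (m%:R * s) *: d - p' = (- s) *: d.
  by apply/matrixP => i j; rewrite !mxE -natr1; ring.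
have H2 := FO p' (y + (m%:R * s) *: d); rewrite E1 dotZr in H2.
have H3 : dot (g p') d <= A + L * (m.+1%:R * s * enorm d) * enorm d.
  have -> : dot (g p') d = A + dot (g p' - g y) d by rewrite dotBl /A; ring.
  have H4 := CS (g p' - g y) d.
  have H5 := glip p' y.
  have E2 : p' - y = (m.+1%:R * s) *: d by apply/matrixP => i j; rewrite !mxE; ring.
  rewrite E2 enormZ ger0_norm in H5; last by rewrite mulr_ge0 // ltW.
  have H6 : enorm (g p' - g y) * enorm d <= L * (m.+1%:R * s * enorm d) * enorm d.
    by rewrite ler_wpM2r.
  lra.
have H7 : s * dot (g p') d <= s * (A + L * (m.+1%:R * s * enorm d) * enorm d).
  by rewrite ler_pM2l.
have E3 : s * (A + L * (m.+1%:R * s * enorm d) * enorm d) = s * A + B * (s * s * m.+1%:R).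
  by rewrite /B; ring.
have E4 : m.+1%:R * s * A + B * (s * s * (m.+1%:R * (m.+1%:R + 1) / 2))
   = (m%:R * s * A + B * (s * s * (m%:R * (m%:R + 1) / 2))) + (s * A + B * (s * s * m.+1%:R)).
  by rewrite -natr1; field.
rewrite E4; lra.
Qed.

Lemma DL y d : f (y + d) <= f y + dot (g y) d + L / 2 * enorm d ^+ 2.
Proof.
set A := dot (g y) d; set B := L * enorm d ^+ 2.
have HB : 0 <= B by rewrite mulr_ge0 // sqr_ge0.
have key : forall N : nat, (0 < N)%N -> f (y + d) - f y - A - B / 2 <= B / (2 * N%:R).
  move=> N HN.
  have HNr : 0 < N%:R :> R by rewrite ltr0n.
  have := @DLgen N%:R^-1 y d N ltac:(by rewrite invr_gt0).
  rewrite mulfV ?gt_eqF // scale1r mul1r -/A -/B.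
  have -> : B * (N%:R^-1 / N%:R * (N%:R * (N%:R + 1) / 2)) = B / 2 + B / (2 * N%:R).
    by field; rewrite gt_eqF.
  lra.
rewrite -subr_ge0; rewrite leNgt; apply/negP => Hneg.
set D := f (y + d) - f y - A - B / 2.
have EB : L / 2 * enorm d ^+ 2 = B / 2 by rewrite /B; ring.
have HD : 0 < D by rewrite /D; lra.
have Hb : 0 <= B / (2 * D) by rewrite divr_ge0 // ?mulr_ge0 // ltW.
have HN := archi_boundP Hb.
set N := Num.Def.archi_bound (B / (2 * D)) in HN.
have := key N.+1 isT.
have HN1 : B / (2 * D) < N.+1%:R by rewrite -[N.+1%:R]natr1; lra.
rewrite ltr_pdivrMr ?mulr_gt0 // in HN1.
rewrite ler_pdivlMr ?mulr_gt0 ?ltr0n //.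
rewrite -/D; have : D * (2 * N.+1%:R) = N.+1%:R * (2 * D) by ring. lra.
Qed.

End Anal.


Section Thresh.
Variables (R : realType) (n : nat).
Notation vec := 'cV[R]_n.
Variables (L mu lam : R) (xv yv gv : vec).
Hypothesis HL : 0 < L.
Hypothesis Hmu : 0 < mu.
Hypothesis Hlam : 0 < lam.
Hypothesis Hmin : is_argmin (fun z => lam * (l0norm z)%:R
                     + L / 2 * enorm (z - yv + L^-1 *: gv) ^+ 2
                     + mu / 2 * enorm (z - yv) ^+ 2) xv.

Lemma dot_dd (i : 'I_n) : dot (delta_mx i 0) (delta_mx i 0 : vec) = 1.
Proof. by rewrite dot_delta mxE !eqxx. Qed.

Lemma sq_pert (w : vec) (i : 'I_n) (D : R) :
  enorm (w + D *: delta_mx i 0) ^+ 2 = enorm w ^+ 2 + 2 * D * w i 0 + D ^+ 2.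
Proof.
rewrite !enorm_sq sqdot dotZr dotZl dotZr dot_dd dot_delta; ring.
Qed.

Lemma thresh_ineq (i : 'I_n) (D : R) :
  lam * (l0norm xv)%:R <= lam * (l0norm (xv + D *: delta_mx i 0))%:R
     + D * ((L + mu) * (xv i 0 - yv i 0) + gv i 0) + (L + mu) / 2 * D ^+ 2.
Proof.
set z := xv + D *: delta_mx i 0.
have := Hmin z.
set w := xv - yv + L^-1 *: gv.
set v := xv - yv.
have E1 : z - yv + L^-1 *: gv = w + D *: delta_mx i 0.
  by apply/matrixP => a b; rewrite !mxE; ring.
have E2 : z - yv = v + D *: delta_mx i 0.
  by apply/matrixP => a b; rewrite !mxE; ring.
rewrite E1 E2 !sq_pert.
have Ew : w i 0 = xv i 0 - yv i 0 + L^-1 * gv i 0 by rewrite !mxE.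
have Ev : v i 0 = xv i 0 - yv i 0 by rewrite !mxE.
rewrite Ew Ev.
have EL : L / 2 * (2 * D * (xv i 0 - yv i 0 + L^-1 * gv i 0)) = L * D * (xv i 0 - yv i 0) + D * gv i 0.
  by field; rewrite gt_eqF.
move=> H.
have E3 : D * ((L + mu) * (xv i 0 - yv i 0) + gv i 0) + (L + mu) / 2 * D ^+ 2
  = L / 2 * (2 * D * (xv i 0 - yv i 0 + L^-1 * gv i 0)) + L / 2 * D ^+ 2
    + (mu / 2 * (2 * D * (xv i 0 - yv i 0)) + mu / 2 * D ^+ 2) by rewrite EL; field.
rewrite -addrA E3.
have E4 : forall a b c : R, L / 2 * (a + b + c) = L / 2 * a + L / 2 * b + L / 2 * c by move=> *; ring.
have E5 : forall a b c : R, mu / 2 * (a + b + c) = mu / 2 * a + mu / 2 * b + mu / 2 * c by move=> *; ring.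
rewrite /= !E4 !E5 in H.
lra.
Qed.

Lemma pert_entry (i j : 'I_n) (D : R) :
  (xv + D *: delta_mx i 0) j 0 = if j == i then xv j 0 + D else xv j 0.
Proof. by rewrite !mxE eqxx andbT; case: eqP => _; rewrite ?mulr1 ?mulr0 ?addr0. Qed.

Lemma l0_pert_le (i : 'I_n) (D : R) : xv i 0 != 0 ->
  leq (l0norm (xv + D *: delta_mx i 0)) (l0norm xv).
Proof.
move=> Hi; rewrite /l0norm; apply: subset_leq_card; apply/fintype.subsetP => j; rewrite !inE pert_entry.
by case: (j =P i) => [->|_] //=; rewrite Hi.
Qed.

Lemma l0_pert_zero (i : 'I_n) : xv i 0 != 0 ->
  (l0norm (xv + (- xv i 0) *: delta_mx i 0)).+1 = l0norm xv.
Proof.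
move=> Hi; rewrite /l0norm [in RHS](cardsD1 i) inE Hi /= add1n; congr (_.+1).
apply: eq_card => j; rewrite !inE pert_entry.
by case: (j =P i) => [->|_] /=; rewrite ?subrr ?eqxx.
Qed.

Lemma thresh_eq (i : 'I_n) : xv i 0 != 0 ->
  (L + mu) * (xv i 0 - yv i 0) + gv i 0 = 0.
Proof.
move=> Hi; have HK : 0 < L + mu by rewrite addr_gt0.
set r := (L + mu) * (xv i 0 - yv i 0) + gv i 0.
set D := - (r / (L + mu)).
have H := thresh_ineq i D.
have Hle := l0_pert_le D Hi.
have Hle' : lam * (l0norm (xv + D *: delta_mx i 0))%:R <= lam * (l0norm xv)%:R.
  by rewrite ler_pM2l // ler_nat.
have E : D * r + (L + mu) / 2 * D ^+ 2 = - (r ^+ 2 / (2 * (L + mu))).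
  by rewrite /D; field; rewrite gt_eqF.
rewrite -/r -addrA E in H.
have H1 : r ^+ 2 / (2 * (L + mu)) <= 0 by lra.
rewrite ler_pdivrMr ?mul0r in H1; last by rewrite mulr_gt0.
have : r ^+ 2 = 0 by apply/eqP; rewrite eq_le H1 sqr_ge0.
by move/eqP; rewrite sqrf_eq0 => /eqP.
Qed.

Lemma thresh_big (i : 'I_n) : xv i 0 != 0 -> 2 * lam <= (L + mu) * xv i 0 ^+ 2.
Proof.
move=> Hi.
have H := thresh_ineq i (- xv i 0).
rewrite thresh_eq // mulr0 addr0 -(l0_pert_zero Hi) -addn1 natrD mulrDr mulr1 in H.
have E : (L + mu) / 2 * (- xv i 0) ^+ 2 = ((L + mu) * xv i 0 ^+ 2) / 2 by rewrite sqrrN; field.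
lra.
Qed.

End Thresh.


Lemma cvg_eps (R : realType) (u : nat -> R) l : (u @ \oo --> l)%classic ->
  forall e : R, 0 < e -> exists N, forall k, (N <= k)%N -> `|l - u k| < e.
Proof.
move=> /cvgrPdist_lt H e he.
have [N _ HN] := H e he.
by exists N => k Hk; apply: HN.
Qed.

Lemma eq0_small (R : realType) (a c : R) : 0 < c ->
  (forall e, 0 < e -> `|a| <= c * e) -> a = 0.
Proof.
move=> hc H; apply/eqP; rewrite -normr_eq0; apply/eqP.
have [->//|Hn] := eqVneq `|a| 0.
have Ha : 0 < `|a| by rewrite lt_neqAle eq_sym Hn normr_ge0.
have := H (`|a| / (2 * c)) (divr_gt0 Ha (mulr_gt0 (ltr0Sn _ 1) hc)).
have -> : c * (`|a| / (2 * c)) = `|a| / 2 by field; rewrite gt_eqF.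
lra.
Qed.

Lemma chain_sub (T : finType) (S : nat -> {set T}) N0 :
  (forall k, (N0 <= k)%N -> S k.+1 \subset S k) ->
  forall j, S (N0 + j)%N \subset S N0.
Proof.
move=> Hdec; elim=> [|j IHj]; first by rewrite addn0 subxx.
apply: (fintype.subset_trans _ IHj); rewrite addnS; apply: Hdec; exact: leq_addr.
Qed.

Lemma stab_sets (T : finType) (S : nat -> {set T}) N0 :
  (forall k, (N0 <= k)%N -> S k.+1 \subset S k) ->
  exists N1, (N0 <= N1)%N /\ forall k, (N1 <= k)%N -> S k = S N1.
Proof.
move: {2}#|S N0| (leqnn #|S N0|) => c.
elim: c N0 => [|c IH] N0 Hc Hdec.
all: have chain := chain_sub Hdec.
all: case: (pselect (exists k, (N0 <= k)%N /\ (#|S k| < #|S N0|)%N)) => [[k [Hk Hlt]]|Hno].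
- by move: Hc; rewrite leqn0 => /eqP Hc; rewrite Hc ltn0 in Hlt.
- exists N0; split => // k Hk; apply/eqP; rewrite eqEcard.
  have := chain (k - N0)%N; rewrite subnKC // => ->; rewrite leqNgt /=.
  by apply/negP => H; apply: Hno; exists k.
- have [N1 [HN1 HN1']] : exists N1, (k <= N1)%N /\ forall k0, (N1 <= k0)%N -> S k0 = S N1.
    apply: IH; first by rewrite -ltnS (leq_trans Hlt).
    by move=> k0 Hk0; apply: Hdec; apply: leq_trans Hk0.
  by exists N1; split => //; apply: leq_trans HN1.
- exists N0; split => // k Hk; apply/eqP; rewrite eqEcard.
  have := chain (k - N0)%N; rewrite subnKC // => ->; rewrite leqNgt /=.
  by apply/negP => H; apply: Hno; exists k.
Qed.

Section Main.
Variables (R : realType) (n : nat).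
Notation vec := 'cV[R]_n.
Variables (f : vec -> R) (g : vec -> vec) (L mu lam : R) (x y : nat -> vec)
  (alpha : nat -> R) (Hm : nat -> 'M[R]_n).
Hypothesis fconv : convex_fun f.
Hypothesis fgrad : has_gradient f g.
Hypothesis fbd : bounded_below f.
Hypothesis HL : 0 < L.
Hypothesis glip : lipschitz_with L g.
Hypothesis Hmu : 0 < mu.
Hypothesis Hlam : 0 < lam.
Hypothesis Hit : VMEPIHT f g L mu lam x y alpha Hm.

Let hs k := Hfun f lam (x k).

Lemma S1 k : hs k + mu / 2 * enorm (x k - y k) ^+ 2 <= Hfun f lam (y k).
Proof.
have [Hmin _ _ _ _] := Hit k.
have H := Hmin (y k).
rewrite subrr add0r /= in H.
have E0 : enorm (0 : vec) = 0 by rewrite /enorm /dot big1 ?sqrtr0 // => i _; rewrite mxE mul0r.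
rewrite E0 expr0n /= mulr0 addr0 in H.
set d := x k - y k in H *.
set G := g (y k) in H.
rewrite !enorm_sq sqdot dotZl !dotZr -!enorm_sq in H.
have HD := DL fconv fgrad (ltW HL) glip (y k) d.
have Ed : y k + d = x k by rewrite /d addrC subrK.
rewrite Ed in HD.
rewrite /hs /Hfun.
have E : L / 2 * (2 * (L^-1 * dot d G)) = dot G d by rewrite dotC; field; rewrite gt_eqF.
have E2 : L / 2 * (L^-1 * (L^-1 * enorm G ^+ 2)) = L / 2 * (L^-1 * (L^-1 * enorm G ^+ 2)) by [].
have E3 : forall a b c : R, L / 2 * (a + b + c) = L / 2 * a + L / 2 * b + L / 2 * c by move=> *; ring.
rewrite E3 E in H.
lra.
Qed.

Lemma supp_y k (i : 'I_n) : x k i 0 = 0 -> y k.+1 i 0 = 0.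
Proof.
move=> H; have [_ _ _ [HC _] _] := Hit k.
by apply: HC; rewrite inE H.
Qed.

Lemma S2 k : Hfun f lam (y k.+1) <= hs k.
Proof.
have [_ _ _ _ Hf] := Hit k.
rewrite /hs /Hfun; apply: lerD => //; rewrite ler_pM2l // ler_nat.
apply: subset_leq_card; apply/fintype.subsetP => i; rewrite !inE.
by apply: contra => /eqP H; apply/eqP; apply: supp_y.
Qed.

Lemma hs_step k : hs k.+1 + mu / 2 * enorm (x k.+1 - y k.+1) ^+ 2 <= hs k.
Proof. exact: le_trans (S1 k.+1) (S2 k). Qed.

Lemma hs_noninc : {homo hs : a b / (a <= b)%N >-> b <= a}.
Proof.
have step : forall k, hs k.+1 <= hs k.
  move=> k; have := hs_step k; have : 0 <= mu / 2 * enorm (x k.+1 - y k.+1) ^+ 2.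
    by rewrite mulr_ge0 ?sqr_ge0 // divr_ge0 // ltW.
  lra.
move=> a b Hab; rewrite -(subnKC Hab).
elim: (b - a)%N => [|j IHj]; first by rewrite addn0.
by rewrite addnS; apply: le_trans (step _) IHj.
Qed.

Lemma hs_lb : has_lbound (range hs).
Proof.
have [m Hm'] := fbd.
exists m => _ [k _ <-]; rewrite /hs /Hfun.
have := Hm' (x k); have : 0 <= lam * (l0norm (x k))%:R by rewrite mulr_ge0 // ltW.
lra.
Qed.

Let l := inf (range hs).

Lemma hs_cvg : (hs @ \oo --> l)%classic.
Proof. exact: nonincreasing_cvgn hs_noninc hs_lb. Qed.

Lemma hs_ge_l k : l <= hs k.
Proof. by rewrite /l (ge_inf hs_lb) //; exists k. Qed.

Lemma dsmall eta : 0 < eta -> exists N, forall k, (N <= k)%N -> enorm (x k - y k) < eta.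
Proof.
move=> he.
have he' : 0 < mu * eta ^+ 2 / 4 by rewrite divr_gt0 // mulr_gt0 // exprn_gt0.
have [N HN] := cvg_eps hs_cvg he'.
exists N.+1 => -[//|k] Hk.
have := HN k Hk; have := hs_ge_l k; have := hs_step k; have := hs_ge_l k.+1.
rewrite ltr_norml => h1 h2 h3 /andP[h4 h5].
have Hd := enorm_ge0 (x k.+1 - y k.+1).
set D := enorm (x k.+1 - y k.+1) in h2 Hd *.
have : mu * D ^+ 2 < mu * eta ^+ 2.
  have -> : mu * D ^+ 2 = 2 * (mu / 2 * D ^+ 2) by field.
  have -> : mu * eta ^+ 2 = 4 * (mu * eta ^+ 2 / 4) by field.
  lra.
rewrite ltr_pM2l // => H.
by rewrite -(ltr_pXn2r (n := 2%N)) ?nnegrE // ltW.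
Qed.

Let K := L + mu.
Let delta := Num.sqrt (2 * lam / K).

Lemma HK : 0 < K.
Proof. by rewrite /K addr_gt0. Qed.

Lemma delta_gt0 : 0 < delta.
Proof. by rewrite sqrtr_gt0 divr_gt0 ?mulr_gt0 // HK. Qed.

Lemma argmin_k k : is_argmin (fun z => lam * (l0norm z)%:R
                     + L / 2 * enorm (z - y k + L^-1 *: g (y k)) ^+ 2
                     + mu / 2 * enorm (z - y k) ^+ 2) (x k).
Proof. by have [H _ _ _ _] := Hit k. Qed.

Lemma big_comp k (i : 'I_n) : x k i 0 != 0 -> delta <= `|x k i 0|.
Proof.
move=> Hi; have := thresh_big HL Hmu Hlam (argmin_k k) Hi.
rewrite /delta -sqrtr_sqr => H; apply: ler_wsqrtr.
rewrite ler_pdivrMr; [rewrite (mulrC _ K); exact: H | exact: HK].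
Qed.

Lemma grad_comp k (i : 'I_n) : x k i 0 != 0 -> K * (x k i 0 - y k i 0) + g (y k) i 0 = 0.
Proof. by move=> Hi; apply: (thresh_eq HL Hmu Hlam (argmin_k k) Hi). Qed.

Definition Sx k := [set i : 'I_n | x k i 0 != 0].

Lemma supp_dec : exists N0, forall k, (N0 <= k)%N -> Sx k.+1 \subset Sx k.
Proof.
have [N0 HN0] := dsmall delta_gt0.
exists N0 => k Hk; apply/fintype.subsetP => i; rewrite !inE => Hi.
apply/negP => /eqP H0.
have Hy := supp_y H0.
have := big_comp Hi.
have := comp_le (x k.+1 - y k.+1) i; rewrite !mxE Hy subr0.
have := HN0 k.+1 (leqW Hk).
lra.
Qed.

Lemma stabilize : exists N1, forall k, (N1 <= k)%N -> Sx k = Sx N1.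
Proof.
have [N0 HN0] := supp_dec.
have [N1 [_ H]] := @stab_sets _ Sx N0 HN0.
by exists N1.
Qed.

Section Clus.
Variables (xs : vec) (N1 : nat).
Hypothesis Hcl : cluster_point x xs.
Hypothesis HN1 : forall k, (N1 <= k)%N -> Sx k = Sx N1.
Let S := Sx N1.

Lemma in_Sk k i : (N1 <= k)%N -> i \in S -> x k i 0 != 0.
Proof. by move=> Hk; rewrite /S -(HN1 Hk) inE. Qed.

Lemma out_Sk k i : (N1 <= k)%N -> i \notin S -> x k i 0 = 0.
Proof. by move=> Hk; rewrite /S -(HN1 Hk) inE negbK => /eqP. Qed.

Lemma norm_tri (a b : R) : `|a| <= `|a - b| + `|b|.
Proof. by have := ler_normD (a - b) b; rewrite subrK. Qed.

Lemma xs_in i : i \in S -> delta <= `|xs i 0|.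
Proof.
move=> Hi; rewrite leNgt; apply/negP => H.
have he : 0 < delta - `|xs i 0| by rewrite subr_gt0.
have [k Hk Hn] := Hcl he N1.
have := big_comp (in_Sk Hk Hi).
have := comp_le (x k - xs) i; rewrite !mxE.
have := norm_tri (x k i 0) (xs i 0).
lra.
Qed.

Lemma xs_out i : i \notin S -> xs i 0 = 0.
Proof.
move=> Hi; apply/eqP; apply: contraT => Hne.
have he : 0 < `|xs i 0| by rewrite normr_gt0.
have [k Hk Hn] := Hcl he N1.
have := comp_le (x k - xs) i; rewrite !mxE (out_Sk Hk Hi) sub0r normrN.
lra.
Qed.

Lemma supp_xs : [set i | xs i 0 != 0] = S.
Proof.
apply/setP => i; rewrite inE; case: (boolP (i \in S)) => H.
  have := xs_in H; have := delta_gt0; rewrite -normr_gt0; lra.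
by rewrite xs_out // eqxx.
Qed.

Lemma l0_xs k : (N1 <= k)%N -> l0norm (x k) = l0norm xs.
Proof. by move=> Hk; rewrite /l0norm supp_xs -/(Sx k) HN1. Qed.

Lemma l_eq : l = Hfun f lam xs.
Proof.
apply/eqP; rewrite -subr_eq0; apply/eqP; apply: (@eq0_small _ _ 2) => // e he.
have [N2 HN2] := cvg_eps hs_cvg he.
have [rho Hrho Hc] := fcont fgrad xs he.
have [k Hk Hn] := Hcl Hrho (maxn N1 N2).
rewrite geq_max in Hk; case/andP: Hk => Hk1 Hk2.
have := HN2 k Hk2; have := Hc _ Hn.
rewrite /hs /Hfun (l0_xs Hk1) !ltr_norml ler_norml.
lra.
Qed.

Lemma grad_zero i : i \in S -> g xs i 0 = 0.
Proof.
move=> Hi.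
have HK' := HK.
apply: (@eq0_small _ _ (2 * L + K)); first by have := HL; lra.
move=> e he.
have [Nd HNd] := dsmall he.
have [k Hk Hn] := Hcl he (maxn N1 Nd).
rewrite geq_max in Hk; case/andP: Hk => Hk1 Hk2.
have Hg := grad_comp (in_Sk Hk1 Hi).
have Hd := HNd k Hk2.
have H1 := comp_le (x k - y k) i; rewrite !mxE in H1.
have H2 := comp_le (g xs - g (y k)) i; rewrite !mxE in H2.
have H3 := glip xs (y k).
have H4 := enormD (xs - x k) (x k - y k).
have E : xs - x k + (x k - y k) = xs - y k by rewrite addrA subrK.
rewrite E in H4.
have E2 : enorm (xs - x k) = enorm (x k - xs) by rewrite -enormN opprB.
rewrite E2 in H4.
have H5 : L * enorm (xs - y k) <= L * (e + e).
  by rewrite ler_pM2l //; lra.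
have H6 : K * `|x k i 0 - y k i 0| <= K * e.
  by rewrite ler_pM2l //; lra.
have E3 : g xs i 0 = (g xs i 0 - g (y k) i 0) - K * (x k i 0 - y k i 0) by lra.
rewrite E3.
have H7 := ler_normB (g xs i 0 - g (y k) i 0) (K * (x k i 0 - y k i 0)).
rewrite normrM (gtr0_norm HK') in H7.
lra.
Qed.

Lemma local_min : local_minimizer (Hfun f lam) xs.
Proof.
have [rho Hrho Hc] := fcont fgrad xs Hlam.
exists (Num.min delta rho); first by rewrite lt_min delta_gt0 Hrho.
move=> z; rewrite lt_min => /andP[Hz1 Hz2].
set Sz := [set i | z i 0 != 0].
have Hsub : S \subset Sz.
  apply/fintype.subsetP => i Hi; rewrite inE; apply/negP => /eqP H0.
  have := xs_in Hi; have := comp_le (z - xs) i; rewrite !mxE H0 sub0r normrN.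
  lra.
have HFO := FO fconv fgrad xs z.
have := Hc _ Hz2; rewrite ltr_norml => /andP[Hc1 Hc2].
rewrite /Hfun.
have El0 : l0norm xs = #|S| by rewrite /l0norm supp_xs.
case: (eqVneq Sz S) => HS.
  have Hdot : dot (g xs) (z - xs) = 0.
    apply: big1 => i _; rewrite !mxE.
    case: (boolP (i \in S)) => Hi; first by rewrite grad_zero // mul0r.
    have Hzi : z i 0 = 0 by move: Hi; rewrite -HS inE negbK => /eqP.
    by rewrite Hzi xs_out // subrr mulr0.
  have -> : l0norm z = l0norm xs by rewrite El0 /l0norm -/Sz HS.
  rewrite Hdot addr0 in HFO; lra.
have Hlt : (#|S| < #|Sz|)%N.
  by apply: proper_card; rewrite finset.properEneq eq_sym HS Hsub.
have Hlt' : (l0norm xs)%:R + 1 <= (l0norm z)%:R :> R.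
  by rewrite El0 natr1 ler_nat.
have : lam * ((l0norm xs)%:R + 1) <= lam * (l0norm z)%:R by rewrite ler_pM2l.
have := FO fconv fgrad xs z.
lra.
Qed.

End Clus.

End Main.

Unset Implicit Arguments.
Set Strict Implicit.
Local Open Scope classical_set_scope.

Theorem theorem1 (R : realType) (n : nat) (f : 'cV[R]_n -> R) (g : 'cV[R]_n -> 'cV[R]_n)
  (L mu lam : R) (x y : nat -> 'cV[R]_n) (alpha : nat -> R) (Hm : nat -> 'M[R]_n) :
  convex_fun f -> has_gradient f g -> bounded_below f ->
  0 < L -> lipschitz_with L g ->
  0 < mu -> 0 < lam ->
  VMEPIHT f g L mu lam x y alpha Hm ->
  (forall xs, cluster_point x xs -> local_minimizer (Hfun f lam) xs) /\
  (forall xs, cluster_point x xs ->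
     (fun k => Hfun f lam (x k)) @ \oo --> Hfun f lam xs).
Proof.
move=> fconv fgrad fbd HL glip Hmu Hlam Hit.
have [N1 HN1] := stabilize fconv fgrad fbd HL glip Hmu Hlam Hit.
split=> xs Hcl.
  exact: (local_min fconv fgrad fbd HL glip Hmu Hlam Hit Hcl HN1).
rewrite -(l_eq fconv fgrad fbd HL glip Hmu Hlam Hit Hcl HN1).
exact: (hs_cvg fconv fgrad fbd HL glip Hmu Hlam Hit).
Qed.
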